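(* For every finite set of formulas $T$ and formula $\phi$ of $\mathsf{JRC}$: if $T\vdash_{\mathsf{JRC}}\phi$ (there is a closed tableau for $\phi$ from $T$), then $T\models_{\mathsf{JRC}}\phi$.
   Context: Language of $\mathsf{JRC}$: countable sets $\mathsf{Var}$ (justification variables) and $\mathsf{Prop}$ (atoms). Terms $t ::= x \mid t+t$ ($x\in\mathsf{Var}$); formulas $\phi ::= p \mid {\sim}\phi \mid \phi\wedge\phi \mid \phi\to\phi \mid \phi\rightsquigarrow\phi \mid t{:}\phi$. A Routley relational model is $\mathcal M=(W,W_N,R,R_{Fm},R_{Tm},{*},\mathcal V)$ where $W$ is nonempty, $W_N\subseteq W$ nonempty (normal states); $R\subseteq W\times W\times W$ satisfies: for $w\in W_N$, $Rwvu$ iff $v=u$; $R_{Fm}$ assigns to each formula $\phi$ a relation $R_\phi\subseteq W\times W$; $R_{Tm}$ assigns to each term $t$ a relation $R_t\subseteq W\times W$; ${*}:W\to W$ with $w^{**}=w$; $\mathcal V:\mathsf{Prop}\to\mathcal P(W)$. Truth at every $w\in W$: $p$ iff $w\in\mathcal V(p)$; ${\sim}\phi$ iff $w^*\not\models\phi$; $\phi\wedge\psi$ iff both; $\phi\to\psi$ iff for all $v,u$ with $Rwvu$, $v\models\phi$ implies $u\models\psi$; $\phi\rightsquigarrow\psi$ iff $R_\phi(w)\subseteq[\psi]$; $t{:}\phi$ iff $R_t(w)\subseteq[\phi]$; $[\phi]=\{w\in W:w\models\phi\}$. A $\mathsf{JRC}$-model is a Routley relational model with: (1) $R_\phi(w)\subseteq[\phi]$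 for all $w\in W_N$ and all $\phi$; (2) for all $w\in W$, if $w\in[\phi]$ then $w\in R_\phi(w)$; (3) $R_{s+t}\subseteq R_s\cap R_t$. $T\models_{\mathsf{JRC}}\phi$ iff for every $\mathsf{JRC}$-model and every $w\in W_N$, if all members of $T$ are true at $w$ then $\phi$ is true at $w$. Tableaux: labels are elements of $\{0,1,2,\dots\}\cup\{0^\sharp,1^\sharp,2^\sharp,\dots\}$, with $\bar i=i^\sharp$ and $\overline{i^\sharp}=i$. Nodes have the forms $\phi,+x$; $\phi,-x$; $x\rhd_\phi y$; $x\rhd_t y$; $rxyz$. Rules (applied to a branch; $x,y,z$ arbitrary labels; $j,k$ natural numbers): (T$\sim$) from ${\sim}\phi,+x$ add $\phi,-\bar x$; (F$\sim$) from ${\sim}\phi,-x$ add $\phi,+\bar x$; (T$\wedge$) from $\phi\wedge\psi,+x$ add $\phi,+x$ and $\psi,+x$; (F$\wedge$) from $\phi\wedge\psi,-x$ split into $\phi,-x$ | $\psi,-x$; (T$\to$) from $\phi\to\psi,+x$ and $rxyz$ split into $\phi,-y$ | $\psi,+z$; (F$\to$) from $\phi\to\psi,-x$ add $rxjk$, $\phi,+j$, $\psi,-k$ with $j,k$ new, and $j=k$ if $x=0$; (T$\rightsquigarrow$) from $\phi\rightsquigarrow\psi,+x$ and $x\rhd_\phi y$ add $\psi,+y$; (F$\rightsquigarrow$) for $x\neq0$, from $\phi\rightsquigarrow\psi,-x$ add $x\rhd_\phi j$ and $\psi,-j$, $j$ new; (F$\rightsquigarrow_0$) from $\phi\rightsquigarrow\psi,-0$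 add $0\rhd_\phi j$, $\phi,+j$, $\psi,-j$, $j$ new; (Cut$_r$) if $\phi$ occurs on the branch as the antecedent of a $\rightsquigarrow$-formula and $x$ occurs on the branch, split into $\phi,-x$ | ($\phi,+x$ and $x\rhd_\phi x$); (T:) from $t{:}\phi,+x$ and $x\rhd_t y$ add $\phi,+y$; (F:) from $t{:}\phi,-x$ add $x\rhd_t j$ and $\phi,-j$, $j$ new; ($\rhd_+$) from $x\rhd_{s+t}y$ add $x\rhd_s y$ and $x\rhd_t y$; (Normality) for any $x$ occurring on the branch add $r0xx$. A branch is closed if it contains $\phi,+x$ and $\phi,-x$ for some $\phi,x$; a tableau is closed if all its branches are. $T\vdash_{\mathsf{JRC}}\phi$ iff there is a closed tableau whose initial single branch consists of $\psi,+0$ for each $\psi\in T$ and $\phi,-0$. *)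

(* Defs.v *)
From Stdlib Require Import List.
Import ListNotations.

Inductive term : Type :=
| TVar : nat -> term
| TPlus : term -> term -> term.

Inductive form : Type :=
| Atom : nat -> form
| Neg : form -> form
| And : form -> form -> form
| Imp : form -> form -> form
| Cimp : form -> form -> form
| Just : term -> form -> form.

Record RModel : Type := {
  W : Type;
  WN : W -> Prop;
  WN_nonempty : exists w, WN w;
  Rel : W -> W -> W -> Prop;
  Rel_normal : forall w, WN w -> forall v u, Rel w v u <-> v = u;
  Rfm : form -> W -> W -> Prop;
  Rtm : term -> W -> W -> Prop;
  star : W -> W;
  star_inv : forall w, star (star w) = w;
  Val : nat -> W -> Prop
}.

Fixpoint sat (M : RModel) (w : W M) (f : form) {struct f} : Prop :=
  match f with
  | Atom p => Val M p w
  | Neg a => ~ sat M (star M w) a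
  | And a c => sat M w a /\ sat M w c
  | Imp a c => forall v u, Rel M w v u -> sat M v a -> sat M u c
  | Cimp a c => forall v, Rfm M a w v -> sat M v c
  | Just t a => forall v, Rtm M t w v -> sat M v a
  end.

Definition JRCModel (M : RModel) : Prop :=
  (forall (w : W M) (f : form), WN M w -> forall v, Rfm M f w v -> sat M v f)
  /\ (forall (w : W M) (f : form), sat M w f -> Rfm M f w w)
  /\ (forall (s t : term) (w v : W M), Rtm M (TPlus s t) w v ->
        Rtm M s w v /\ Rtm M t w v).

Definition JRC_consequence (T : list form) (phi : form) : Prop :=
  forall M : RModel, JRCModel M ->
  forall w : W M, WN M w ->
    (forall psi, In psi T -> sat M w psi) -> sat M w phi.

(* label (n, false) is the natural number n; (n, true) is n^sharp *)
Definition label : Type := (nat * bool)%type.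
Definition bar (x : label) : label := (fst x, negb (snd x)).
Definition lab0 : label := (0, false).
Definition natlab (j : nat) : label := (j, false).

Inductive node : Type :=
| SF : form -> bool -> label -> node          (* phi, +x (true) / phi, -x (false) *)
| NRf : form -> label -> label -> node
| NRt : term -> label -> label -> node
| NR : label -> label -> label -> node.

Definition node_labels (n : node) : list label :=
  match n with
  | SF _ _ x => [x]
  | NRf _ x y => [x; y]
  | NRt _ x y => [x; y]
  | NR x y z => [x; y; z]
  end.

Definition branch := list node.

Definition occurs (x : label) (b : branch) : Prop :=
  exists n, In n b /\ In x (node_labels n).

Definition fresh (j : nat) (b : branch) : Prop :=
  ~ occurs (j, false) b /\ ~ occurs (j, true) b.

(* step b E : some rule is applicable to branch b, and its application splits
   b into the branches e ++ b for e in E. *)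
Inductive step (b : branch) : list (list node) -> Prop :=
| st_TNeg a x : In (SF (Neg a) true x) b -> step b [[SF a false (bar x)]]
| st_FNeg a x : In (SF (Neg a) false x) b -> step b [[SF a true (bar x)]]
| st_TAnd a c x : In (SF (And a c) true x) b ->
    step b [[SF a true x; SF c true x]]
| st_FAnd a c x : In (SF (And a c) false x) b ->
    step b [[SF a false x]; [SF c false x]]
| st_TImp a c x y z : In (SF (Imp a c) true x) b -> In (NR x y z) b ->
    step b [[SF a false y]; [SF c true z]]
| st_FImp a c x j k : In (SF (Imp a c) false x) b ->
    fresh j b -> fresh k b ->
    (x = lab0 -> j = k) -> (x <> lab0 -> j <> k) ->
    step b [[NR x (natlab j) (natlab k); SF a true (natlab j);
             SF c false (natlab k)]]
| st_TCimp a c x y : In (SF (Cimp a c) true x) b -> In (NRf a x y) b ->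
    step b [[SF c true y]]
| st_FCimp a c x j : x <> lab0 -> In (SF (Cimp a c) false x) b -> fresh j b ->
    step b [[NRf a x (natlab j); SF c false (natlab j)]]
| st_FCimp0 a c j : In (SF (Cimp a c) false lab0) b -> fresh j b ->
    step b [[NRf a lab0 (natlab j); SF a true (natlab j);
             SF c false (natlab j)]]
| st_Cut a c s y x : In (SF (Cimp a c) s y) b -> occurs x b ->
    step b [[SF a false x]; [SF a true x; NRf a x x]]
| st_TJ t a x y : In (SF (Just t a) true x) b -> In (NRt t x y) b ->
    step b [[SF a true y]]
| st_FJ t a x j : In (SF (Just t a) false x) b -> fresh j b ->
    step b [[NRt t x (natlab j); SF a false (natlab j)]]
| st_Plus s t x y : In (NRt (TPlus s t) x y) b ->
    step b [[NRt s x y; NRt t x y]]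
| st_Norm x : occurs x b -> step b [[NR lab0 x x]].

Definition closed_branch (b : branch) : Prop :=
  exists f x, In (SF f true x) b /\ In (SF f false x) b.

Inductive closable : branch -> Prop :=
| cl_closed b : closed_branch b -> closable b
| cl_step b E : step b E -> (forall e, In e E -> closable (e ++ b)) ->
    closable b.

Definition initial_branch (T : list form) (phi : form) : branch :=
  map (fun psi => SF psi true lab0) T ++ [SF phi false lab0].

Definition JRC_derivable (T : list form) (phi : form) : Prop :=
  closable (initial_branch T phi).

(* Main.v *)
Require Import Defs.
From Stdlib Require Import List Classical PeanoNat.
Import ListNotations.

Definition lv (M:RModel) (g:nat -> W M) (l:label) : W M :=
  if snd l then star M (g (fst l)) else g (fst l).

Definition nsat (M:RModel) (L: label -> W M) (n:node) : Prop :=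
  match n with
  | SF a true x => sat M (L x) a
  | SF a false x => ~ sat M (L x) a
  | NRf a x y => Rfm M a (L x) (L y)
  | NRt t x y => Rtm M t (L x) (L y)
  | NR x y z => Rel M (L x) (L y) (L z)
  end.

Lemma nsat_ext M (L L' : label -> W M) n :
  (forall l, In l (node_labels n) -> L l = L' l) -> nsat M L n -> nsat M L' n.
Proof.
  intros H; destruct n as [a [|] x|a x y|t x y|x y z]; simpl in *;
  rewrite ?(H x), ?(H y), ?(H z) by tauto; auto.
Qed.

Definition faithful M (g : nat -> W M) b :=
  WN M (g 0) /\ forall n, In n b -> nsat M (lv M g) n.

Definition upd M (g : nat -> W M) j v : nat -> W M :=
  fun n => if Nat.eqb n j then v else g n.

Lemma lv_upd_occ M g j v b x : occurs x b -> fresh j b ->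
  lv M (upd M g j v) x = lv M g x.
Proof.
  intros Ho [F1 F2]. destruct x as [m s]. unfold lv, upd; simpl.
  destruct (Nat.eqb m j) eqn:E; auto.
  apply Nat.eqb_eq in E; subst. destruct s; [elim F2|elim F1]; exact Ho.
Qed.

Lemma upd_ok M g j v b : fresh j b ->
  (forall n, In n b -> nsat M (lv M g) n) ->
  forall n, In n b -> nsat M (lv M (upd M g j v)) n.
Proof.
  intros Fr H n Hn. eapply nsat_ext; [|apply H; exact Hn].
  intros l Hl. symmetry. apply (lv_upd_occ M g j v b); auto. exists n; auto.
Qed.

Lemma lv_bar M g x : lv M g (bar x) = star M (lv M g x).
Proof. destruct x as [n [|]]; unfold lv, bar; simpl; auto. rewrite star_inv; auto. Qed.

Lemma lv_nat M g j : lv M g (natlab j) = g j.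
Proof. reflexivity. Qed.

Lemma upd_eq M g j v : upd M g j v j = v.
Proof. unfold upd; rewrite Nat.eqb_refl; auto. Qed.

Lemma upd_neq M g j v k : k <> j -> upd M g j v k = g k.
Proof. intros H; unfold upd; destruct (Nat.eqb k j) eqn:E; auto.
  apply Nat.eqb_eq in E; contradiction. Qed.

Lemma fresh_nz j b : occurs lab0 b -> fresh j b -> j <> 0.
Proof. intros H [F _] ->. exact (F H). Qed.

Lemma faithful_app M g e b : WN M (g 0) ->
  (forall n, In n e -> nsat M (lv M g) n) ->
  (forall n, In n b -> nsat M (lv M g) n) -> faithful M g (e ++ b).
Proof.
  intros H0 He Hb; split; auto. intros n Hn; apply in_app_or in Hn; destruct Hn; auto.
Qed.

Ltac occ_of H := eexists; split; [exact H| simpl; tauto].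

Lemma step_sound M (HM: JRCModel M) b E g :
  occurs lab0 b -> faithful M g b -> step b E ->
  exists e g', In e E /\ faithful M g' (e ++ b).
Proof.
  intros H0 [HN Hb] Hs. destruct HM as [C1 [C2 C3]].
  destruct Hs.
  - exists [SF a false (bar x)], g; split; [simpl; auto|].
    apply faithful_app; auto. intros n [<-|[]]; simpl.
    rewrite lv_bar. exact (Hb _ H).
  - exists [SF a true (bar x)], g; split; [simpl; auto|].
    apply faithful_app; auto. intros n [<-|[]]; simpl.
    rewrite lv_bar. pose proof (Hb _ H) as K; simpl in K. apply NNPP; exact K.
  - exists [SF a true x; SF c true x], g; split; [simpl; auto|].
    pose proof (Hb _ H) as K; simpl in K.
    apply faithful_app; auto. intros n [<-|[<-|[]]]; simpl; tauto.
  - pose proof (Hb _ H) as K; simpl in K.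
    destruct (classic (sat M (lv M g x) a)) as [Ha|Ha].
    + exists [SF c false x], g; split; [simpl; auto|].
      apply faithful_app; auto. intros n [<-|[]]; simpl; tauto.
    + exists [SF a false x], g; split; [simpl; auto|].
      apply faithful_app; auto. intros n [<-|[]]; simpl; tauto.
  - pose proof (Hb _ H) as K; simpl in K. pose proof (Hb _ H1) as K1; simpl in K1.
    destruct (classic (sat M (lv M g y) a)) as [Ha|Ha].
    + exists [SF c true z], g; split; [simpl; auto|].
      apply faithful_app; auto. intros n [<-|[]]; simpl; eauto.
    + exists [SF a false y], g; split; [simpl; auto|].
      apply faithful_app; auto. intros n [<-|[]]; simpl; tauto.
  - pose proof (Hb _ H) as K; simpl in K.
    assert (exists v u, Rel M (lv M g x) v u /\ sat M v a /\ ~ sat M u c) as [v [u [R1 [R2 R3]]]].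
    { apply NNPP; intro N; apply K; intros v u R Sa. apply NNPP; intro Sc.
      apply N; eauto. }
    assert (Ox : occurs x b) by occ_of H.
    pose proof (fresh_nz _ _ H0 H1) as Nj. pose proof (fresh_nz _ _ H0 H2) as Nk.
    destruct (classic (x = lab0)) as [Ex|Ex].
    + specialize (H3 Ex); subst k.
      assert (v = u) as <-.
      { subst x. apply (Rel_normal M (g 0) HN). exact R1. }
      exists [NR x (natlab j) (natlab j); SF a true (natlab j); SF c false (natlab j)], (upd M g j v).
      split; [simpl; auto|]. apply faithful_app.
      * rewrite upd_neq; auto.
      * intros n [<-|[<-|[<-|[]]]]; simpl;
        rewrite ?lv_nat, ?upd_eq, ?(lv_upd_occ M g j v b x); auto.
      * apply upd_ok; auto.
    + specialize (H4 Ex).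
      exists [NR x (natlab j) (natlab k); SF a true (natlab j); SF c false (natlab k)],
        (upd M (upd M g j v) k u).
      split; [simpl; auto|]. apply faithful_app.
      * rewrite !upd_neq; auto.
      * intros n [<-|[<-|[<-|[]]]]; simpl;
        rewrite ?lv_nat, ?upd_eq, ?(upd_neq M _ k u j), ?upd_eq,
          ?(lv_upd_occ M _ k u b x), ?(lv_upd_occ M g j v b x); auto.
      * apply upd_ok; auto. apply upd_ok; auto.
  - exists [SF c true y], g; split; [simpl; auto|].
    pose proof (Hb _ H) as K; simpl in K. pose proof (Hb _ H1) as K1; simpl in K1.
    apply faithful_app; auto. intros n [<-|[]]; simpl; eauto.
  - pose proof (Hb _ H1) as K; simpl in K.
    assert (exists v, Rfm M a (lv M g x) v /\ ~ sat M v c) as [v [R1 R2]].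
    { apply NNPP; intro N; apply K; intros v R. apply NNPP; intro Sc. apply N; eauto. }
    assert (Ox : occurs x b) by occ_of H1.
    pose proof (fresh_nz _ _ H0 H2) as Nj.
    exists [NRf a x (natlab j); SF c false (natlab j)], (upd M g j v).
    split; [simpl; auto|]. apply faithful_app.
    * rewrite upd_neq; auto.
    * intros n [<-|[<-|[]]]; simpl;
      rewrite ?lv_nat, ?upd_eq, ?(lv_upd_occ M g j v b x); auto.
    * apply upd_ok; auto.
  - pose proof (Hb _ H) as K; simpl in K.
    assert (exists v, Rfm M a (lv M g lab0) v /\ ~ sat M v c) as [v [R1 R2]].
    { apply NNPP; intro N; apply K; intros v R. apply NNPP; intro Sc. apply N; eauto. }
    pose proof (fresh_nz _ _ H0 H1) as Nj.
    exists [NRf a lab0 (natlab j); SF a true (natlab j); SF c false (natlab j)], (upd M g j v).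
    split; [simpl; auto|]. apply faithful_app.
    * rewrite upd_neq; auto.
    * intros n [<-|[<-|[<-|[]]]]; simpl;
      rewrite ?lv_nat, ?upd_eq, ?(lv_upd_occ M g j v b lab0); auto.
      eapply C1; [exact HN|exact R1].
    * apply upd_ok; auto.
  - destruct (classic (sat M (lv M g x) a)) as [Ha|Ha].
    + exists [SF a true x; NRf a x x], g; split; [simpl; auto|].
      apply faithful_app; auto. intros n [<-|[<-|[]]]; simpl; auto.
    + exists [SF a false x], g; split; [simpl; auto|].
      apply faithful_app; auto. intros n [<-|[]]; simpl; auto.
  - exists [SF a true y], g; split; [simpl; auto|].
    pose proof (Hb _ H) as K; simpl in K. pose proof (Hb _ H1) as K1; simpl in K1.
    apply faithful_app; auto. intros n [<-|[]]; simpl; eauto.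
  - pose proof (Hb _ H) as K; simpl in K.
    assert (exists v, Rtm M t (lv M g x) v /\ ~ sat M v a) as [v [R1 R2]].
    { apply NNPP; intro N; apply K; intros v R. apply NNPP; intro Sc. apply N; eauto. }
    assert (Ox : occurs x b) by occ_of H.
    pose proof (fresh_nz _ _ H0 H1) as Nj.
    exists [NRt t x (natlab j); SF a false (natlab j)], (upd M g j v).
    split; [simpl; auto|]. apply faithful_app.
    * rewrite upd_neq; auto.
    * intros n [<-|[<-|[]]]; simpl;
      rewrite ?lv_nat, ?upd_eq, ?(lv_upd_occ M g j v b x); auto.
    * apply upd_ok; auto.
  - exists [NRt s x y; NRt t x y], g; split; [simpl; auto|].
    pose proof (Hb _ H) as K; simpl in K. apply C3 in K.
    apply faithful_app; auto. intros n [<-|[<-|[]]]; simpl; tauto.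
  - exists [NR lab0 x x], g; split; [simpl; auto|].
    apply faithful_app; auto. intros n [<-|[]]; simpl.
    apply (Rel_normal M (g 0) HN); auto.
Qed.

Lemma closable_sound M (HM : JRCModel M) b : closable b ->
  forall g, occurs lab0 b -> faithful M g b -> False.
Proof.
  induction 1 as [b Hc|b E Hs Hcl IH]; intros g H0 Hf.
  - destruct Hc as [f [x [A B]]]. destruct Hf as [_ Hb].
    pose proof (Hb _ A); pose proof (Hb _ B); simpl in *; tauto.
  - destruct (step_sound M HM b E g H0 Hf Hs) as [e [g' [He Hf']]].
    apply (IH e He g'); auto.
    destruct H0 as [n [Hn Hl]]; exists n; split; auto. apply in_or_app; auto.
Qed.

Theorem mainTheorem17 (T : list form) (phi : form) :
  JRC_derivable T phi -> JRC_consequence T phi.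
Proof.
  intros Hd M HM w Hw HT. apply NNPP; intro Hn.
  apply (closable_sound M HM _ Hd (fun _ => w)).
  - exists (SF phi false lab0); split; [|simpl; auto].
    unfold initial_branch; apply in_or_app; right; simpl; auto.
  - split; auto. intros n Hi. unfold initial_branch in Hi.
    apply in_app_or in Hi; destruct Hi as [Hi|[<-|[]]].
    + apply in_map_iff in Hi; destruct Hi as [psi [<- Hp]]; simpl. apply HT; auto.
    + simpl. exact Hn.
Qed.
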